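(* Let $\Sigma\subseteq\mathbb{Z}^{n+2}$ be as defined in the context, and let $e_0,\dots,e_t\in\Sigma$ with positive integer first coordinates $\delta_0,\dots,\delta_t$ be such that $\Sigma$ is contained in the $\mathbb{Q}_{\ge0}$-span of $e_0,\dots,e_t$. Let $S=\sum_{j=0}^t\delta_j$, let $w_1,\dots,w_r$ be in bijection with the nonzero elements $\sigma_1,\dots,\sigma_r$ of $\Sigma$ whose first coordinate is at most $S$, and let $\chi:k[w_1,\dots,w_r]\to k[\Sigma]$ be the homomorphism of graded $k$-algebras sending $w_i$ to the monomial of $k[\Sigma]$ corresponding to $\sigma_i$ (with $\deg w_i$ = first coordinate of $\sigma_i$). Then $\chi$ is surjective and $\ker\chi$ is generated by homogeneous elements of degree at most $2(S-1)$.
   Context: Fix $\alpha_0,\dots,\alpha_n\in\mathbb{Q}$ and $a_i,b_i\in\mathbb{Z}$; $\Sigma=\{(d,c_0,\dots,c_n)\in\mathbb{Z}^{n+2}:d\ge0,\ c_i\ge-d\alpha_i\ \forall i,\ \sum a_ic_i=\sum b_ic_i=0\}$, a semigroup under addition. $k[\Sigma]$ is the semigroup ring, with $k$-basis the monomials $u^dz_0^{c_0}\cdots z_n^{c_n}$ for $(d,c_0,\dots,c_n)\in\Sigma$, graded by $d$. *)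

(* Defs.v *)
From HB Require Import structures.
From mathcomp Require Import all_boot all_order all_algebra.
Set Implicit Arguments. Unset Strict Implicit. Unset Printing Implicit Defensive.
Import Order.TTheory GRing.Theory Num.Theory.
Local Open Scope ring_scope.

(* A point (d, c_0, ..., c_n) of Z^{n+2}: first coordinate d, rest c. *)
Definition point (n : nat) : Type := (int * {ffun 'I_n.+1 -> int})%type.

Definition pt_add n (x y : point n) : point n :=
  (x.1 + y.1, [ffun i => x.2 i + y.2 i]).
Definition pt_zero n : point n := (0, [ffun _ => 0]).
Definition pt_scale n (m : nat) (x : point n) : point n :=
  (x.1 *+ m, [ffun i => x.2 i *+ m]).

Definition inSigma n (alpha : 'I_n.+1 -> rat) (a b : 'I_n.+1 -> int)
    (x : point n) : Prop :=
  0 <= x.1 /\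
  (forall i, - (x.1%:~R * alpha i) <= (x.2 i)%:~R :> rat) /\
  \sum_i a i * x.2 i = 0 /\ \sum_i b i * x.2 i = 0.

Definition inQnnSpan n t (e : 'I_t.+1 -> point n) (x : point n) : Prop :=
  exists lam : 'I_t.+1 -> rat, (forall j, 0 <= lam j) /\
    (x.1)%:~R = \sum_j lam j * ((e j).1)%:~R /\
    (forall i, (x.2 i)%:~R = \sum_j lam j * ((e j).2 i)%:~R).

(* Polynomials in k[w_1..w_r], given as finite formal sums of terms
   c * w^m (coefficient, exponent vector); two term lists denote the same
   polynomial iff their coefficient functions agree. *)
Definition mono (r : nat) := {ffun 'I_r -> nat}.
Definition mpoly (k : fieldType) (r : nat) := seq (k * mono r)%type.

Definition pcoef (k : fieldType) r (p : mpoly k r) (m : mono r) : k :=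
  \sum_(u <- p | u.2 == m) u.1.

Definition pmul (k : fieldType) r (p q : mpoly k r) : mpoly k r :=
  [seq (u.1 * v.1, [ffun i => u.2 i + v.2 i] : mono r) | u : (k * mono r)%type <- p, v : (k * mono r)%type <- q].

(* Elements of k[Sigma]: finite formal sums of c * u^s, s a point. *)
Definition scoef (k : fieldType) n (f : seq (k * point n)%type) (x : point n) : k :=
  \sum_(u <- f | u.2 == x) u.1.

(* chi : w_i |-> monomial of sigma_i; the image of w^m is the monomial of
   sum_i m_i sigma_i. chi p is given by its coefficient function on Z^{n+2}. *)
Definition mexp n r (sigma : 'I_r -> point n) (m : mono r) : point n :=
  \big[@pt_add n / pt_zero n]_i pt_scale (m i) (sigma i).

Definition chi (k : fieldType) n r (sigma : 'I_r -> point n) (p : mpoly k r)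
    (x : point n) : k :=
  \sum_(u <- p | mexp sigma u.2 == x) u.1.

Definition mdeg n r (sigma : 'I_r -> point n) (m : mono r) : int :=
  \sum_i (sigma i).1 *+ m i.

Definition homogeneous (k : fieldType) n r (sigma : 'I_r -> point n)
    (D : int) (p : mpoly k r) : Prop :=
  forall m, pcoef p m != 0 -> mdeg sigma m = D.

(* Main.v *)
Require Import Defs.
From HB Require Import structures.
From mathcomp Require Import all_boot all_order all_algebra.
From mathcomp Require Import zify ring lra.
Import Order.TTheory GRing.Theory Num.Theory.
Local Open Scope ring_scope.
Set Implicit Arguments. Unset Strict Implicit. Unset Printing Implicit Defensive.

Lemma pt_ext n (x y : point n) : x.1 = y.1 -> (forall i, x.2 i = y.2 i) -> x = y.
Proof. case: x => x1 x2; case: y => y1 y2 /= -> H; congr pair; apply/ffunP=> i; exact: H. Qed.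

Definition pt_sub n (x y : point n) : point n := (x.1 - y.1, [ffun i => x.2 i - y.2 i]).

Definition madd r (a b : mono r) : mono r := [ffun i => (a i + b i)%N].
Definition mvar r (i : 'I_r) : mono r := [ffun j => nat_of_bool (i == j)].
Definition mzero r : mono r := [ffun _ => 0%N].

Lemma mexp1 n r (sigma : 'I_r -> point n) m :
  (mexp sigma m).1 = \sum_i (sigma i).1 *+ m i.
Proof. by rewrite /mexp (big_morph (fun x : point n => x.1) (id1 := 0) (op1 := +%R)). Qed.

Lemma mexp2 n r (sigma : 'I_r -> point n) m j :
  (mexp sigma m).2 j = \sum_i (sigma i).2 j *+ m i.
Proof.
rewrite /mexp (big_morph (fun x : point n => x.2 j) (id1 := 0) (op1 := +%R)).
- by apply: eq_bigr => i _; rewrite ffunE.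
- by move=> x y; rewrite /pt_add /= ffunE.
- by rewrite /pt_zero /= ffunE.
Qed.

Lemma mdegE n r (sigma : 'I_r -> point n) m : mdeg sigma m = (mexp sigma m).1.
Proof. by rewrite mexp1. Qed.

Lemma mexp_add n r (sigma : 'I_r -> point n) a b :
  mexp sigma (madd a b) = pt_add (mexp sigma a) (mexp sigma b).
Proof.
apply: pt_ext => [|j]; rewrite /pt_add /= ?ffunE ?mexp1 ?mexp2 -big_split /=;
  by apply: eq_bigr => i _; rewrite ffunE mulrnDr.
Qed.

Lemma sum_delta (R : nmodType) r (i : 'I_r) (f : 'I_r -> R) :
  \sum_j f j *+ nat_of_bool (i == j) = f i.
Proof.
rewrite (bigD1 i) //= eqxx big1 ?addr0 // => j /negbTE; rewrite eq_sym => ->.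
by rewrite mulr0n.
Qed.

Lemma mexp_var n r (sigma : 'I_r -> point n) i : mexp sigma (mvar i) = sigma i.
Proof.
apply: pt_ext => [|j]; rewrite ?mexp1 ?mexp2.
  rewrite -(sum_delta i (fun l => (sigma l).1)); apply: eq_bigr => l _; by rewrite ffunE.
rewrite -(sum_delta i (fun l => (sigma l).2 j)); apply: eq_bigr => l _; by rewrite ffunE.
Qed.

Lemma mexp_zero n r (sigma : 'I_r -> point n) : mexp sigma (mzero r) = pt_zero n.
Proof.
apply: pt_ext => [|j]; rewrite ?mexp1 ?mexp2 /pt_zero /= ?ffunE;
  by apply: big1 => i _; rewrite ffunE.
Qed.

Definition dlt (k : fieldType) r (m x : mono r) : k := (x == m)%:R.
Definition mle r (a x : mono r) := [forall i, (a i <= x i)%N].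
Definition msub r (x a : mono r) : mono r := [ffun i => (x i - a i)%N].

Lemma madd_eq r (a v x : mono r) : (madd a v == x) = mle a x && (v == msub x a).
Proof.
apply/eqP/andP => [<-|[/forallP H /eqP ->]].
  split; first by apply/forallP=> i; rewrite ffunE leq_addr.
  by apply/eqP/ffunP=> i; rewrite !ffunE addKn.
by apply/ffunP=> i; rewrite !ffunE subnKC.
Qed.

Lemma pcoef_cat (k : fieldType) r (p q : mpoly k r) m :
  pcoef (p ++ q) m = pcoef p m + pcoef q m.
Proof. by rewrite /pcoef big_cat. Qed.

Lemma pcoef_nil (k : fieldType) r m : pcoef ([::] : mpoly k r) m = 0.
Proof. by rewrite /pcoef big_nil. Qed.

Lemma pcoef_flatten (k : fieldType) r (s : seq (mpoly k r)) m :
  pcoef (flatten s) m = \sum_(p <- s) pcoef p m.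
Proof.
elim: s => [|p s IH]; first by rewrite big_nil pcoef_nil.
by rewrite /= pcoef_cat IH big_cons.
Qed.

Lemma pcoef_pmul (k : fieldType) r (q g : mpoly k r) x :
  pcoef (pmul q g) x =
  \sum_(u <- q) u.1 * (if mle u.2 x then pcoef g (msub x u.2) else 0).
Proof.
elim: q => [|u q IH]; first by rewrite big_nil /pmul /= pcoef_nil.
rewrite big_cons -IH /pmul allpairs_cons pcoef_cat; congr (_ + _).
rewrite /pcoef big_map /=.
under eq_bigl do rewrite -/(madd u.2 _) madd_eq.
case: (mle u.2 x) => /=; last by rewrite big_pred0 ?mulr0.
by rewrite mulr_sumr.
Qed.


Definition goodgen (k : fieldType) n r (sigma : 'I_r -> point n) (B : int) (g : mpoly k r) :=
  (exists D : int, D <= B /\ homogeneous sigma D g) /\ (forall x, chi sigma g x = 0).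

Definition InI (k : fieldType) n r (sigma : 'I_r -> point n) (B : int) (f : mono r -> k) :=
  exists gs : seq (mpoly k r * mpoly k r),
    (forall qg, qg \in gs -> goodgen sigma B qg.2) /\
    (forall m, f m = pcoef (flatten [seq pmul qg.1 qg.2 | qg <- gs]) m).


Lemma InI_ext (k : fieldType) n r (sigma : 'I_r -> point n) (B : int) (f g : mono r -> k) :
  (forall m, f m = g m) -> InI sigma B f -> InI sigma B g.
Proof. move=> E [gs [H1 H2]]; exists gs; split => // m; by rewrite -E. Qed.

Lemma InI0 (k : fieldType) n r (sigma : 'I_r -> point n) B :
  InI sigma (B : int) (fun _ => 0 : k).
Proof. by exists [::]; split => // m; rewrite pcoef_nil. Qed.

Lemma InI_add (k : fieldType) n r (sigma : 'I_r -> point n) (B : int) (f g : mono r -> k) :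
  InI sigma B f -> InI sigma B g -> InI sigma (B : int) (fun m => f m + g m).
Proof.
move=> [gs [H1 H2]] [gs' [H1' H2']]; exists (gs ++ gs'); split.
  by move=> qg; rewrite mem_cat => /orP[]; [apply: H1|apply: H1'].
by move=> m; rewrite map_cat flatten_cat pcoef_cat H2 H2'.
Qed.

Definition pscale (k : fieldType) r (c : k) (q : mpoly k r) : mpoly k r :=
  [seq (c * u.1, u.2) | u <- q].
Definition pshift (k : fieldType) r (a : mono r) (q : mpoly k r) : mpoly k r :=
  [seq (u.1, madd a u.2) | u <- q].

Lemma InI_scale (k : fieldType) n r (sigma : 'I_r -> point n) (B : int) (c : k) (f : mono r -> k) :
  InI sigma B f -> InI sigma (B : int) (fun m => c * f m).
Proof.
move=> [gs [H1 H2]]; exists [seq (pscale c qg.1, qg.2) | qg <- gs]; split.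
  by move=> qg /mapP[qg' Hin ->]; exact: (H1 qg' Hin).
move=> m; rewrite H2 !pcoef_flatten !big_map mulr_sumr; apply: eq_bigr => qg _.
by rewrite !pcoef_pmul big_map mulr_sumr; apply: eq_bigr => u _ /=; rewrite mulrA.
Qed.

Lemma mle_add r (a u x : mono r) : mle (madd a u) x = mle a x && mle u (msub x a).
Proof.
apply/forallP/andP => [H|[/forallP H1 /forallP H2] i].
  split; apply/forallP => i; move: (H i); rewrite !ffunE; lia.
by move: (H1 i) (H2 i); rewrite !ffunE; lia.
Qed.

Lemma msub_add r (a u x : mono r) : msub x (madd a u) = msub (msub x a) u.
Proof. by apply/ffunP => i; rewrite !ffunE subnDA. Qed.

Lemma InI_shift (k : fieldType) n r (sigma : 'I_r -> point n) (B : int) (a : mono r) (f : mono r -> k) :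
  InI sigma B f -> InI sigma (B : int) (fun x => if mle a x then f (msub x a) else 0).
Proof.
move=> [gs [H1 H2]]; exists [seq (pshift a qg.1, qg.2) | qg <- gs]; split.
  by move=> qg /mapP[qg' Hin ->]; exact: (H1 qg' Hin).
move=> x; rewrite !pcoef_flatten !big_map.
case: ifP => Hax.
  rewrite H2 pcoef_flatten big_map; apply: eq_bigr => qg _.
  rewrite !pcoef_pmul big_map; apply: eq_bigr => u _ /=.
  by rewrite mle_add Hax /= msub_add.
rewrite big1 // => qg _; rewrite pcoef_pmul big_map big1 // => u _ /=.
by rewrite mle_add Hax /= mulr0.
Qed.

Lemma InI_gen (k : fieldType) n r (sigma : 'I_r -> point n) (B : int) (q g : mpoly k r) :
  goodgen sigma B g -> InI sigma (B : int) (pcoef (pmul q g)).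
Proof.
move=> Hg; exists [:: (q, g)]; split.
  by move=> qg; rewrite inE => /eqP ->.
by move=> m; rewrite /= cats0.
Qed.

Lemma InI_sum (k : fieldType) n r (sigma : 'I_r -> point n) (B : int) (I : eqType) (s : seq I)
  (F : I -> mono r -> k) :
  (forall i, i \in s -> InI sigma (B : int) (F i)) -> InI sigma (B : int) (fun m => \sum_(i <- s) F i m).
Proof.
elim: s => [|i s IH] H.
  by apply: (InI_ext _ (InI0 k sigma B)) => m; rewrite big_nil.
have H1 := H i (mem_head _ _).
have H2 : InI sigma B (fun m => \sum_(j <- s) F j m).
  by apply: IH => j Hj; apply: H; rewrite inE Hj orbT.
by apply: (InI_ext _ (InI_add H1 H2)) => m; rewrite big_cons.
Qed.


Definition Conn (k : fieldType) n r (sigma : 'I_r -> point n) (B : int) (m m' : mono r) :=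
  InI sigma B (fun x => dlt k m x - dlt k m' x).

Lemma conn_refl (k : fieldType) n r (sigma : 'I_r -> point n) (B : int) m :
  Conn k sigma B m m.
Proof. by apply: (InI_ext _ (InI0 k sigma B)) => x; rewrite subrr. Qed.

Lemma conn_trans (k : fieldType) n r (sigma : 'I_r -> point n) (B : int) m1 m2 m3 :
  Conn k sigma B m1 m2 -> Conn k sigma B m2 m3 -> Conn k sigma B m1 m3.
Proof.
move=> H1 H2; apply: (InI_ext _ (InI_add H1 H2)) => x.
by rewrite addrA subrK.
Qed.

Lemma conn_sym (k : fieldType) n r (sigma : 'I_r -> point n) (B : int) m1 m2 :
  Conn k sigma B m1 m2 -> Conn k sigma B m2 m1.
Proof.
move=> H; apply: (InI_ext _ (InI_scale (-1) H)) => x.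
by rewrite mulN1r opprB.
Qed.

Lemma conn_shift (k : fieldType) n r (sigma : 'I_r -> point n) (B : int) a m1 m2 :
  Conn k sigma B m1 m2 -> Conn k sigma B (madd a m1) (madd a m2).
Proof.
move=> H; apply: (InI_ext _ (InI_shift a H)) => x.
rewrite /dlt !(eq_sym x) !madd_eq; case: (mle a x) => /=; last by rewrite subrr.
by rewrite !(eq_sym _ (msub x a)).
Qed.

Lemma conn_base (k : fieldType) n r (sigma : 'I_r -> point n) (B : int) m1 m2 :
  mexp sigma m1 = mexp sigma m2 -> mdeg sigma m1 <= B -> Conn k sigma B m1 m2.
Proof.
move=> He Hd.
pose g : mpoly k r := [:: (1, m1); (-1, m2)].
have Hpg x : pcoef g x = dlt k m1 x - dlt k m2 x.
  rewrite /pcoef /dlt !big_cons big_nil /= !(eq_sym x).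
  by case: (m1 == x); case: (m2 == x); rewrite /= ?addr0 ?add0r ?subr0 ?sub0r ?subrr ?oppr0.
have Hg : goodgen sigma B g.
  split.
    exists (mdeg sigma m1); split => // mm; rewrite Hpg /dlt.
    case: (eqVneq mm m1) => [->//|H1]; case: (eqVneq mm m2) => [->|H2].
      by rewrite !mdegE He.
    by rewrite /= subrr eqxx.
  move=> x; rewrite /chi !big_cons big_nil /= He.
  by case: (mexp sigma m2 == x); rewrite ?addr0 ?subrr.
apply: (InI_ext _ (InI_gen [:: (1, mzero r)] Hg)) => x.
rewrite pcoef_pmul big_cons big_nil addr0 /= mul1r.
have -> : mle (mzero r) x by apply/forallP => i; rewrite ffunE.
have -> : msub x (mzero r) = x by apply/ffunP => i; rewrite !ffunE subn0.
by rewrite Hpg.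
Qed.

Lemma kernel_gen (k : fieldType) n r (sigma : 'I_r -> point n) (B : int) :
  (forall m m', mexp sigma m = mexp sigma m' -> Conn k sigma B m m') ->
  forall p : mpoly k r, (forall x, chi sigma p x = 0) -> InI sigma B (pcoef p).
Proof.
move=> Hc p Hp.
have exN (m : mono r) : exists m', (fun m' => mexp sigma m' == mexp sigma m) m' by exists m.
pose N m := xchoose (exN m).
have NE m : mexp sigma (N m) = mexp sigma m by apply/eqP; exact: (xchooseP (exN m)).
have Nfib m m' : mexp sigma m = mexp sigma m' -> N m = N m'.
  by move=> E; apply: eq_xchoose => z /=; rewrite E.
have Z x : \sum_(u <- p) u.1 * dlt k (N u.2) x = 0.
  case: (eqVneq (N x) x) => Hx.
    transitivity (chi sigma p (mexp sigma x)); last exact: Hp.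
    rewrite /chi [RHS]big_mkcond /=; apply: eq_bigr => u _; rewrite /dlt.
    have -> : (x == N u.2) = (mexp sigma u.2 == mexp sigma x).
      apply/eqP/eqP => [->|E]; first by rewrite NE.
      by rewrite -Hx (Nfib _ _ E).
    by case: (mexp sigma u.2 == mexp sigma x); rewrite ?mulr1 ?mulr0.
  rewrite big1 // => u _; rewrite /dlt; case: eqP => [E|]; last by rewrite mulr0.
  by move: Hx; rewrite E (Nfib _ _ (NE u.2)) eqxx.
have H : InI sigma B (fun x => \sum_(u <- p) u.1 * (dlt k u.2 x - dlt k (N u.2) x)).
  apply: InI_sum => u _; apply: InI_scale; apply: Hc; by rewrite NE.
apply: (InI_ext _ H) => x.
under eq_bigr do rewrite mulrBr.
rewrite sumrB Z subr0 /pcoef [RHS]big_mkcond /=; apply: eq_bigr => u _.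
by rewrite /dlt eq_sym; case: (u.2 == x); rewrite ?mulr1 ?mulr0.
Qed.


Definition Rep n t (e : 'I_t.+1 -> point n) (lam : 'I_t.+1 -> rat) (x : point n) :=
  (forall j, 0 <= lam j) /\ ((x.1)%:~R = \sum_j lam j * ((e j).1)%:~R) /\
  (forall i, (x.2 i)%:~R = \sum_j lam j * ((e j).2 i)%:~R).

Lemma intr_sum (I : Type) (s : seq I) (f : I -> int) :
  ((\sum_(i <- s) f i)%:~R : rat) = \sum_(i <- s) (f i)%:~R.
Proof. exact: (big_morph (fun z : int => z%:~R : rat) (@intrD _) (mulr0z _)). Qed.

Lemma rep_sigma n (alpha : 'I_n.+1 -> rat) (a b : 'I_n.+1 -> int) t (e : 'I_t.+1 -> point n)
  (he : forall j, inSigma alpha a b (e j)) lam x :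
  Rep e lam x -> inSigma alpha a b x.
Proof.
move=> [H0 [H1 H2]].
have Heq (c : 'I_n.+1 -> int) : (forall j, \sum_i c i * (e j).2 i = 0) ->
    \sum_i c i * x.2 i = 0.
  move=> Hc; apply: (@intr_inj rat); rewrite intr_sum mulr0z.
  under eq_bigr do rewrite intrM H2 mulr_sumr.
  rewrite exchange_big /= big1 // => j _.
  under eq_bigr do rewrite mulrCA.
  rewrite -mulr_sumr.
  have -> : \sum_i (c i)%:~R * ((e j).2 i)%:~R = (\sum_i c i * (e j).2 i)%:~R :> rat.
    by rewrite intr_sum; apply: eq_bigr => i _; rewrite intrM.
  by rewrite Hc mulr0.
split.
  rewrite -(ler0z rat) H1; apply: sumr_ge0 => j _; apply: mulr_ge0 => //.
  by rewrite ler0z; case: (he j).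
split.
  move=> i; rewrite H1 H2 mulr_suml -sumrN; apply: ler_sum => j _.
  rewrite -mulrA -mulrN; apply: ler_wpM2l => //; by case: (he j) => _ [].
split; apply: Heq => j; by case: (he j) => _ [_ []].
Qed.

Lemma rep_add n t (e : 'I_t.+1 -> point n) lam mu x y :
  Rep e lam x -> Rep e mu y -> Rep e (fun j => lam j + mu j) (pt_add x y).
Proof.
move=> [Hl0 [Hl1 Hl2]] [Hm0 [Hm1 Hm2]]; split; first by move=> j; rewrite addr_ge0.
split; first by rewrite /= intrD Hl1 Hm1 -big_split /=; apply: eq_bigr => j _; rewrite mulrDl.
by move=> i; rewrite /= ffunE intrD Hl2 Hm2 -big_split /=; apply: eq_bigr => j _; rewrite mulrDl.
Qed.

Lemma rep_sub n t (e : 'I_t.+1 -> point n) lam mu x y :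
  Rep e lam x -> Rep e mu y -> (forall j, mu j <= lam j) ->
  Rep e (fun j => lam j - mu j) (pt_sub x y).
Proof.
move=> [Hl0 [Hl1 Hl2]] [Hm0 [Hm1 Hm2]] Hle; split; first by move=> j; rewrite subr_ge0.
split; first by rewrite /= intrB Hl1 Hm1 -sumrB /=; apply: eq_bigr => j _; rewrite mulrBl.
by move=> i; rewrite /= ffunE intrB Hl2 Hm2 -sumrB /=; apply: eq_bigr => j _; rewrite mulrBl.
Qed.

Definition unitv t (j : 'I_t.+1) : 'I_t.+1 -> rat := fun l => (l == j)%:R.

Lemma rep_e n t (e : 'I_t.+1 -> point n) j : Rep e (unitv j) (e j).
Proof.
have Hs (f : 'I_t.+1 -> rat) : f j = \sum_l unitv j l * f l.
  rewrite (bigD1 j) //= big1 /unitv ?eqxx ?mul1r ?addr0 // => l /negbTE ->.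
  by rewrite mul0r.
split; first by move=> l; rewrite /unitv ler0n.
split; first exact: (Hs (fun l => ((e l).1)%:~R)).
move=> i; exact: (Hs (fun l => ((e l).2 i)%:~R)).
Qed.

Lemma pt_add_sub n (x y : point n) : pt_add y (pt_sub x y) = x.
Proof. apply: pt_ext => [|i]; rewrite /= ?ffunE; ring. Qed.

Lemma pt_sub_add n (x y : point n) : pt_sub (pt_add y x) y = x.
Proof. apply: pt_ext => [|i]; rewrite /= ?ffunE; ring. Qed.

Lemma pt_addC n (x y : point n) : pt_add x y = pt_add y x.
Proof. apply: pt_ext => [|i]; rewrite /= ?ffunE; ring. Qed.

Lemma pt_addA n (x y z : point n) : pt_add x (pt_add y z) = pt_add (pt_add x y) z.
Proof. apply: pt_ext => [|i]; rewrite /= ?ffunE; ring. Qed.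


Lemma e_le_S n t (e : 'I_t.+1 -> point n) (hdelta : forall j, 0 < (e j).1) j :
  (e j).1 <= \sum_l (e l).1.
Proof.
rewrite (bigD1 j) //= lerDl sumr_ge0 // => l _; exact: ltW.
Qed.

Lemma rep_ge0 n t (e : 'I_t.+1 -> point n) (hdelta : forall j, 0 < (e j).1) lam x :
  Rep e lam x -> 0 <= x.1.
Proof.
move=> [H0 [H1 _]]; rewrite -(ler0z rat) H1; apply: sumr_ge0 => j _.
by apply: mulr_ge0 => //; rewrite ler0z ltW.
Qed.

Lemma rep_zero n t (e : 'I_t.+1 -> point n) (hdelta : forall j, 0 < (e j).1) lam x :
  Rep e lam x -> x.1 = 0 -> x = pt_zero n.
Proof.
move=> [H0 [H1 H2]] Hx.
have Hge : forall l : 'I_t.+1, true -> 0 <= lam l * ((e l).1)%:~R.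
  by move=> l _; apply: mulr_ge0 => //; rewrite ler0z ltW.
have Hs : \sum_j lam j * ((e j).1)%:~R = 0 by rewrite -H1 Hx.
have Hl j : lam j = 0.
  move: (@psumr_eq0P _ _ _ _ Hge Hs j isT) => /eqP; rewrite mulf_eq0 => /orP[/eqP //|].
  by rewrite intr_eq0 gt_eqF.
apply: pt_ext => [|i]; first by rewrite Hx.
rewrite /pt_zero /= ffunE; apply: (@intr_inj rat); rewrite H2 mulr0z big1 // => j _.
by rewrite Hl mul0r.
Qed.

Lemma rep_pos n t (e : 'I_t.+1 -> point n) (hdelta : forall j, 0 < (e j).1) lam x :
  Rep e lam x -> x != pt_zero n -> 0 < x.1.
Proof.
move=> H Hx; rewrite lt_def (rep_ge0 hdelta H) andbT.
by apply: contra Hx => /eqP Hx1; rewrite (rep_zero hdelta H Hx1).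
Qed.

Lemma extract n t (e : 'I_t.+1 -> point n) (hdelta : forall j, 0 < (e j).1) lam x :
  Rep e lam x -> \sum_l (e l).1 <= x.1 -> exists j, 1 <= lam j.
Proof.
move=> [H0 [H1 H2]] HS.
case: (boolP [exists j, 1 <= lam j]) => [/existsP //|/existsPn H].
have : x.1 < \sum_l (e l).1.
  rewrite -(ltr_int rat) H1 intr_sum; apply: ltr_sum.
    by apply/hasP; exists ord0 => //; rewrite mem_index_enum.
  move=> j _; move: (H j); rewrite -ltNge => Hj.
  have Hd : (0 : rat) < ((e j).1)%:~R by rewrite ltr0z.
  nra.
by rewrite ltNge HS.
Qed.

Lemma rep_sub_e n t (e : 'I_t.+1 -> point n) lam x j :
  Rep e lam x -> 1 <= lam j -> Rep e (fun l => lam l - unitv j l) (pt_sub x (e j)).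
Proof.
move=> H Hj; apply: (rep_sub H (rep_e e j)) => l; rewrite /unitv.
case: (eqVneq l j) => [->//|_] /=; by case: H.
Qed.

Lemma surj n (alpha : 'I_n.+1 -> rat) (a b : 'I_n.+1 -> int) t (e : 'I_t.+1 -> point n)
    (he : forall j, inSigma alpha a b (e j))
    (hdelta : forall j, 0 < (e j).1)
    (hspan : forall x, inSigma alpha a b x -> inQnnSpan e x)
    r (sigma : 'I_r -> point n)
    (hsig_onto : forall x, inSigma alpha a b x -> x != pt_zero n ->
                   x.1 <= \sum_j (e j).1 -> exists i, sigma i = x) :
  forall y, inSigma alpha a b y -> exists c, mexp sigma c = y.
Proof.
have ei j : exists i, sigma i = e j.
  apply: hsig_onto => //; last exact: e_le_S.
  by apply/eqP => E; move: (hdelta j); rewrite E ltxx.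
suff H N : forall y, inSigma alpha a b y -> y.1 < N%:Z -> exists c, mexp sigma c = y.
  move=> y Hy; apply: (H (absz y.1).+1) => //.
  case: Hy => Hy _; rewrite -[X in X < _]gez0_abs //; lia.
elim: N => [|N IH] y Hy HN.
  by case: Hy => Hy _; move: HN; rewrite ltNge Hy.
case: (eqVneq y (pt_zero n)) => [->|Hy0]; first by exists (mzero r); rewrite mexp_zero.
case: (lerP y.1 (\sum_j (e j).1)) => HyS.
  by have [i Hi] := hsig_onto y Hy Hy0 HyS; exists (mvar i); rewrite mexp_var.
have [lam Hl] := hspan y Hy.
have [j Hj] := extract hdelta Hl (ltW HyS).
have Hz := rep_sub_e Hl Hj.
have [c Hc] : exists c, mexp sigma c = pt_sub y (e j).
  apply: IH; first exact: (rep_sigma he Hz).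
  rewrite /=; move: (hdelta j) HN; lia.
have [i Hi] := ei j.
by exists (madd (mvar i) c); rewrite mexp_add mexp_var Hi Hc pt_add_sub.
Qed.


Lemma lin_sum (I : finType) (f g v : I -> rat) (s : rat) :
  \sum_l (f l + s * (g l - f l)) * v l =
  \sum_l f l * v l + s * (\sum_l g l * v l - \sum_l f l * v l).
Proof. rewrite -sumrB mulr_sumr -big_split; apply: eq_bigr => l _ /=; ring. Qed.

Lemma rep_comb n t (e : 'I_t.+1 -> point n) lam lam' x (s : rat) :
  Rep e lam x -> Rep e lam' x -> 0 <= s -> s <= 1 ->
  Rep e (fun l => lam l + s * (lam' l - lam l)) x.
Proof.
move=> [H0 [H1 H2]] [H0' [H1' H2']] Hs0 Hs1; split.
  move=> l; move: (H0 l) (H0' l) => h h'; nra.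
split; first by rewrite lin_sum -H1 -H1' subrr mulr0 addr0.
by move=> i; rewrite lin_sum -H2 -H2' subrr mulr0 addr0.
Qed.

Lemma rep_le n t (e : 'I_t.+1 -> point n) (hdelta : forall j, 0 < (e j).1) lam x l :
  Rep e lam x -> lam l <= (x.1)%:~R.
Proof.
move=> [H0 [H1 _]]; rewrite H1 (bigD1 l) //=.
have Hd : (1 : rat) <= ((e l).1)%:~R by rewrite ler1z; exact: hdelta.
have Hr : 0 <= \sum_(i < t.+1 | i != l) lam i * ((e i).1)%:~R.
  by apply: sumr_ge0 => i _; apply: mulr_ge0 => //; rewrite ler0z ltW.
move: (H0 l) => h; nra.
Qed.

Lemma chain n t (e : 'I_t.+1 -> point n) (hdelta : forall j, 0 < (e j).1) (x : point n)
  (hx : \sum_l (e l).1 < x.1) (R : 'I_t.+1 -> 'I_t.+1 -> Prop)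
  (Rtr : forall a b c, R a b -> R b c -> R a c)
  (HQ : forall lam a b, Rep e lam x -> 1 <= lam a -> 1 <= lam b -> R a b)
  lam lam' j j' : Rep e lam x -> Rep e lam' x -> 1 <= lam j -> 1 <= lam' j' -> R j j'.
Proof.
move=> Hl Hl' Hj Hj'.
set S := \sum_l (e l).1 in hx.
pose Sr : rat := S%:~R; pose dr : rat := (x.1)%:~R; pose T : rat := (t.+1)%:R.
have HS1 : 1 <= Sr.
  rewrite /Sr ler1z; apply: le_trans (e_le_S hdelta ord0); exact: hdelta.
have HdS : Sr + 1 <= dr.
  have H : S + 1 <= x.1 by lia.
  by move: H; rewrite -(ler_int rat) intrD mulr1z.
have HT : 1 <= T by rewrite /T ler1n.
pose eps := (T * Sr)^-1.
have Heps : eps * (T * Sr) = 1 by rewrite mulVf //; apply: lt0r_neq0; nra.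
have Heps0 : 0 < eps by rewrite invr_gt0; nra.
have HepsS : eps * Sr <= 1.
  have : (eps * Sr) * T = 1 by rewrite -Heps; ring.
  move=> E; nra.
have big mu : Rep e mu x -> exists l, 1 + eps <= mu l.
  move=> Hm; case: (boolP [exists l, 1 + eps <= mu l]) => [/existsP //|/existsPn H].
  case: Hm => [H0 [H1 _]].
  have : dr < (1 + eps) * Sr.
    rewrite /dr H1 /Sr /S intr_sum mulr_sumr; apply: ltr_sum.
      by apply/hasP; exists ord0 => //; rewrite mem_index_enum.
    move=> l _; move: (H l); rewrite -ltNge => Hm.
    have Hd : (0 : rat) < ((e l).1)%:~R by rewrite ltr0z.
    nra.
  move=> Hc; exfalso; nra.
have HS0 : 0 < S by apply: lt_le_trans (hdelta ord0) (e_le_S hdelta ord0).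
have [K [HK0 HK]] : exists K : nat, (0 < K)%N /\ dr * (T * Sr) <= K%:R.
  have Hp : 0 <= dr * (T * Sr) by apply: mulr_ge0; [rewrite /dr ler0z; lia | nra].
  exists (Num.Def.archi_bound (dr * (T * Sr))).+1; split => //.
  apply: le_trans (ltW (archi_boundP Hp)) _; by rewrite ler_nat.
pose Kr : rat := K%:R.
have HKr : 0 < Kr by rewrite /Kr ltr0n.
pose L (k : nat) := fun l => lam l + (k%:R / Kr) * (lam' l - lam l).
have HL k : (k <= K)%N -> Rep e (L k) x.
  move=> Hk; apply: rep_comb => //.
    by apply: divr_ge0; rewrite ?ler0n ?ltW.
  by rewrite ler_pdivrMr // mul1r /Kr ler_nat.
pose J k := odflt ord0 [pick l | 1 + eps <= L k l].
have HJ k : (k <= K)%N -> 1 + eps <= L k (J k).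
  move=> Hk; rewrite /J; case: pickP => [l //|H] /=.
  have [l Hl2] := big _ (HL k Hk); by move: (H l); rewrite Hl2.
have Hstep k l : (k < K)%N -> 1 + eps <= L k l -> 1 <= L k.+1 l.
  move=> Hk Hkl.
  have Hlm := @rep_le _ _ _ hdelta _ _ l Hl.
  have Hl0 : 0 <= lam' l by case: Hl'.
  have Hw : dr / Kr <= eps.
    rewrite ler_pdivrMr // mulrC /eps ler_pdivlMr; last by nra.
    move: HK; rewrite -/Kr => HK; nra.
  have -> : L k.+1 l = L k l + (lam' l - lam l) / Kr.
    rewrite /L -addn1 natrD; field; exact: lt0r_neq0.
  have : lam l / Kr <= dr / Kr by rewrite ler_pM2r // invr_gt0.
  have : 0 <= lam' l / Kr by apply: divr_ge0 => //; exact: ltW.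
  rewrite mulrBl; lra.
have L0 l : L 0%N l = lam l by rewrite /L mul0r mul0r addr0.
have LK l : L K l = lam' l by rewrite /L divff ?mul1r ?subrKC //; exact: lt0r_neq0.
have Hind k : (k <= K)%N -> R j (J k).
  elim: k => [|k IH] Hk.
    apply: (HQ lam) => //; rewrite -L0; move: (HJ 0%N Hk); lra.
  apply: Rtr (IH (ltnW Hk)) _; apply: (HQ (L k.+1)); first exact: HL.
    by apply: Hstep => //; apply: HJ; exact: ltnW.
  move: (HJ _ Hk); lra.
apply: Rtr (Hind K (leqnn K)) _; apply: (HQ lam') => //.
by rewrite -LK; move: (HJ K (leqnn K)); lra.
Qed.


Lemma maddC r (a b : mono r) : madd a b = madd b a.
Proof. by apply/ffunP => i; rewrite !ffunE addnC. Qed.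
Lemma maddA r (a b c : mono r) : madd a (madd b c) = madd (madd a b) c.
Proof. by apply/ffunP => i; rewrite !ffunE addnA. Qed.
Lemma maddCA r (a b c : mono r) : madd a (madd b c) = madd b (madd a c).
Proof. by apply/ffunP => i; rewrite !ffunE addnCA. Qed.

Lemma msplit r (m : mono r) : m != mzero r -> exists i m1, m = madd (mvar i) m1.
Proof.
move=> Hm.
have [i Hi] : exists i, (0 < m i)%N.
  case: (boolP [exists i, (0 < m i)%N]) => [/existsP //|/existsPn H].
  have E : m = mzero r.
    apply/ffunP => i; rewrite ffunE; move: (H i); rewrite -leqNgt; by case: (m i).
  by move: Hm; rewrite E eqxx.
exists i, [ffun l => m l - nat_of_bool (i == l)]%N.
apply/ffunP => l; rewrite !ffunE; case: (eqVneq i l) => [<-|] /=; lia.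
Qed.

Lemma mono_ind r (P : mono r -> Prop) :
  P (mzero r) -> (forall i m, P m -> P (madd (mvar i) m)) -> forall m, P m.
Proof.
move=> H0 HS m.
move: {2}(\sum_i m i).+1 (ltnSn (\sum_i m i)) => N; elim: N m => // N IH m HN.
case: (eqVneq m (mzero r)) => [->//|Hm].
have [i [m1 E]] := msplit Hm; rewrite E; apply: HS; apply: IH.
have H1 : (\sum_l madd (mvar i) m1 l = \sum_l mvar i l + \sum_l m1 l)%N.
  by rewrite -big_split; apply: eq_bigr => l _; rewrite ffunE.
have H2 : (\sum_l mvar i l = 1)%N.
  rewrite (bigD1 i) //= big1 ?ffunE ?eqxx // => l Hl; rewrite ffunE eq_sym.
  by move/negbTE: Hl => ->.
move: HN; rewrite E H1 H2; lia.
Qed.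

Lemma rep_pt_zero n t (e : 'I_t.+1 -> point n) : Rep e (fun _ => 0) (pt_zero n).
Proof.
split => //; split; first by rewrite /= mulr0z big1 // => j _; rewrite mul0r.
by move=> i; rewrite /= ffunE mulr0z big1 // => j _; rewrite mul0r.
Qed.


Lemma mexp_rep n (alpha : 'I_n.+1 -> rat) (a b : 'I_n.+1 -> int) t (e : 'I_t.+1 -> point n)
    (hspan : forall x, inSigma alpha a b x -> inQnnSpan e x)
    r (sigma : 'I_r -> point n)
    (hsig_in : forall i, [/\ inSigma alpha a b (sigma i), sigma i != pt_zero n
                             & (sigma i).1 <= \sum_j (e j).1]) :
  forall m, exists lam, Rep e lam (mexp sigma m).
Proof.
apply: mono_ind; first by exists (fun _ => 0); rewrite mexp_zero; exact: rep_pt_zero.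
move=> i m [lam H]; have [Hi _ _] := hsig_in i; have [mu Hmu] := hspan _ Hi.
by exists (fun j => mu j + lam j); rewrite mexp_add mexp_var; apply: rep_add.
Qed.

Lemma sig_ge1 n (alpha : 'I_n.+1 -> rat) (a b : 'I_n.+1 -> int) t (e : 'I_t.+1 -> point n)
    (hdelta : forall j, 0 < (e j).1)
    (hspan : forall x, inSigma alpha a b x -> inQnnSpan e x)
    r (sigma : 'I_r -> point n)
    (hsig_in : forall i, [/\ inSigma alpha a b (sigma i), sigma i != pt_zero n
                             & (sigma i).1 <= \sum_j (e j).1]) i :
  1 <= (sigma i).1.
Proof.
have [Hi Hz _] := hsig_in i; have [mu Hmu] := hspan _ Hi.
by have := rep_pos hdelta Hmu Hz.
Qed.

Lemma deg_pos n (alpha : 'I_n.+1 -> rat) (a b : 'I_n.+1 -> int) t (e : 'I_t.+1 -> point n)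
    (hdelta : forall j, 0 < (e j).1)
    (hspan : forall x, inSigma alpha a b x -> inQnnSpan e x)
    r (sigma : 'I_r -> point n)
    (hsig_in : forall i, [/\ inSigma alpha a b (sigma i), sigma i != pt_zero n
                             & (sigma i).1 <= \sum_j (e j).1]) m :
  0 <= (mexp sigma m).1 /\ (m != mzero r -> 1 <= (mexp sigma m).1).
Proof.
have H0 m0 : 0 <= (mexp sigma m0).1.
  have [lam Hl] := mexp_rep hspan hsig_in m0; exact: (rep_ge0 hdelta Hl).
split => // Hm; have [i [m1 ->]] := msplit Hm.
rewrite mexp_add mexp_var /=; have := sig_ge1 hdelta hspan hsig_in i; have := H0 m1; lia.
Qed.


Lemma fiber_conn (k : fieldType) n (alpha : 'I_n.+1 -> rat) (a b : 'I_n.+1 -> int)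
    (t : nat) (e : 'I_t.+1 -> point n)
    (he : forall j, inSigma alpha a b (e j))
    (hdelta : forall j, 0 < (e j).1)
    (hspan : forall x, inSigma alpha a b x -> inQnnSpan e x)
    (r : nat) (sigma : 'I_r -> point n)
    (hsig_inj : injective sigma)
    (hsig_in : forall i, [/\ inSigma alpha a b (sigma i), sigma i != pt_zero n
                             & (sigma i).1 <= \sum_j (e j).1])
    (hsig_onto : forall x, inSigma alpha a b x -> x != pt_zero n ->
                   x.1 <= \sum_j (e j).1 -> exists i, sigma i = x) :
  forall m m', mexp sigma m = mexp sigma m' ->
    Conn k sigma (2 * (\sum_j (e j).1 - 1)) m m'.
Proof.
set S := \sum_j (e j).1.
set B := 2 * (S - 1).
have HS1 : 1 <= S by have := hdelta ord0; have := e_le_S hdelta ord0; rewrite -/S; lia.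
have [ie Hie] : exists ie : 'I_t.+1 -> 'I_r, forall j, sigma (ie j) = e j.
  apply: (@fin_all_exists _ (fun _ => 'I_r) (fun j i => sigma i = e j)) => j; apply: hsig_onto => //; last exact: e_le_S.
  by apply/eqP => E; move: (hdelta j); rewrite E ltxx.
have Hdeg m := deg_pos hdelta hspan hsig_in m.
have Hin m : inSigma alpha a b (mexp sigma m).
  have [lam Hl] := mexp_rep hspan hsig_in m; exact: (rep_sigma he Hl).
have Hsurj := surj he hdelta hspan hsig_onto.
suff H N : forall m m', (mexp sigma m).1 < N%:Z -> mexp sigma m = mexp sigma m' ->
    Conn k sigma B m m'.
  move=> m m' E; apply: (H (absz (mexp sigma m).1).+1) => //.
  have := (Hdeg m).1; lia.
elim: N => [|N IH] m m' HN E.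
  by have := (Hdeg m).1; lia.
set x := mexp sigma m in E HN *.
set D := x.1 in HN *.
case: (lerP D B) => HDB.
  by apply: conn_base => //; rewrite mdegE.
have single m0 : (mexp sigma m0).1 = 1 -> exists i, m0 = mvar i.
  move=> H1; have Hm0 : m0 != mzero r by apply/eqP => Z; move: H1; rewrite Z mexp_zero.
  have [i [m1 Em]] := msplit Hm0; exists i; rewrite Em.
  case: (eqVneq m1 (mzero r)) => [->|Hm1]; first by apply/ffunP => l; rewrite !ffunE addn0.
  exfalso; move: H1; rewrite Em mexp_add mexp_var /=.
  have := (Hdeg m1).2 Hm1; have := sig_ge1 hdelta hspan hsig_in i; lia.
case: (eqVneq D 1) => HD1.
  have [i Ei] := single m HD1.
  have [i' Ei'] : exists i', m' = mvar i' by apply: single; rewrite -E.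
  move: E; rewrite /x Ei Ei' !mexp_var => /hsig_inj ->; exact: conn_refl.
have IHD m1 m1' : (mexp sigma m1).1 < D -> mexp sigma m1 = mexp sigma m1' ->
    Conn k sigma B m1 m1'.
  move=> H1 E1; apply: IH E1; move: HN H1; lia.
have toB0 p q : mexp sigma (madd p q) = x -> S <= (mexp sigma p).1 -> q != mzero r ->
    exists j c, mexp sigma (madd (mvar (ie j)) c) = x /\
      Conn k sigma B (madd p q) (madd (mvar (ie j)) c).
  move=> Hpq Hp Hq.
  have [lam Hl] := hspan _ (Hin p).
  have [j Hj] := extract hdelta Hl Hp.
  have [c0 Hc0] := Hsurj _ (rep_sigma he (rep_sub_e Hl Hj)).
  have Ep : mexp sigma (madd (mvar (ie j)) c0) = mexp sigma p.
    by rewrite mexp_add mexp_var Hie Hc0 pt_add_sub.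
  exists j, (madd q c0); split.
    by rewrite maddCA mexp_add Ep -mexp_add maddC.
  have Hlt : (mexp sigma p).1 < D.
    rewrite /D -Hpq mexp_add /=; have := (Hdeg q).2 Hq; lia.
  have := conn_shift q (IHD _ _ Hlt (esym Ep)).
  have -> : madd p q = madd q p by exact: maddC.
  by have -> : madd (mvar (ie j)) (madd q c0) = madd q (madd (mvar (ie j)) c0) by exact: maddCA.
have toB m0 : mexp sigma m0 = x -> exists j c, mexp sigma (madd (mvar (ie j)) c) = x /\
    Conn k sigma B m0 (madd (mvar (ie j)) c).
  move=> Hm0.
  have Hnz : m0 != mzero r.
    apply/eqP => Z; move: HD1 HDB; rewrite /D -Hm0 Z mexp_zero /B /=; lia.
  have [i [m1 Em]] := msplit Hnz.
  have Hm1 : m1 != mzero r.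
    apply/eqP => Z; move: Hm0; rewrite Em Z.
    have -> : madd (mvar i) (mzero r) = mvar i by apply/ffunP => l; rewrite !ffunE addn0.
    rewrite mexp_var => Ex; have [_ _ HiS] := hsig_in i.
    move: HiS HD1 HDB; rewrite /D -Ex /B -/S; lia.
  case: (lerP S (sigma i).1) => Hi.
    rewrite Em; apply: toB0 => //; by [rewrite -Em | rewrite mexp_var].
  rewrite Em maddC; apply: toB0.
  - by rewrite maddC -Em.
  - move: Hm0; rewrite Em mexp_add mexp_var => Ex.
    move: HDB Hi; rewrite /D -Ex /B /=; lia.
  - by apply/eqP => /ffunP /(_ i); rewrite !ffunE eqxx.
have Ec j1 c1 : mexp sigma (madd (mvar (ie j1)) c1) = x -> mexp sigma c1 = pt_sub x (e j1).
  by move=> H1; rewrite -H1 mexp_add mexp_var Hie pt_sub_add.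
pose R := fun j1 j2 => (exists c1, mexp sigma (madd (mvar (ie j1)) c1) = x) /\
   forall c1 c2, mexp sigma (madd (mvar (ie j1)) c1) = x ->
     mexp sigma (madd (mvar (ie j2)) c2) = x ->
     Conn k sigma B (madd (mvar (ie j1)) c1) (madd (mvar (ie j2)) c2).
have Rtr : forall a1 a2 a3, R a1 a2 -> R a2 a3 -> R a1 a3.
  move=> a1 a2 a3 [H1 H12] [[c2 Hc2] H23]; split => // c1 c3 Hc1 Hc3.
  exact: conn_trans (H12 _ _ Hc1 Hc2) (H23 _ _ Hc2 Hc3).
have ltD j1 : (pt_sub x (e j1)).1 < D by rewrite /= /D; have := hdelta j1; lia.
have HQ : forall lam j1 j2, Rep e lam x -> 1 <= lam j1 -> 1 <= lam j2 -> R j1 j2.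
  move=> lam j1 j2 Hl H1 H2.
  have Hz1 := rep_sub_e Hl H1.
  have [c1 Hc1] := Hsurj _ (rep_sigma he Hz1).
  split.
    by exists c1; rewrite mexp_add mexp_var Hie Hc1 pt_add_sub.
  move=> d1 d2 Hd1 Hd2.
  have Ed1 := Ec _ _ Hd1; have Ed2 := Ec _ _ Hd2.
  case: (eqVneq j1 j2) => [Ej|Hne].
    subst j2; apply: conn_shift; apply: IHD; first by rewrite Ed1; exact: ltD.
    by rewrite Ed1 Ed2.
  have H2' : 1 <= (fun l => lam l - unitv j1 l) j2.
    by rewrite /= /unitv eq_sym (negbTE Hne) subr0.
  have Hw := rep_sub_e Hz1 H2'.
  have [cw Hcw] := Hsurj _ (rep_sigma he Hw).
  have Eb : mexp sigma (madd (mvar (ie j2)) cw) = pt_sub x (e j1).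
    by rewrite mexp_add mexp_var Hie Hcw pt_add_sub.
  have Ea : mexp sigma (madd (mvar (ie j1)) cw) = pt_sub x (e j2).
    rewrite mexp_add mexp_var Hie Hcw; apply: pt_ext => [|i]; rewrite /= ?ffunE; ring.
  have C1 := conn_shift (mvar (ie j1))
     (IHD d1 (madd (mvar (ie j2)) cw) (ltac:(rewrite Ed1; exact: ltD)) (ltac:(by rewrite Ed1 Eb))).
  have C2 := conn_shift (mvar (ie j2))
     (IHD d2 (madd (mvar (ie j1)) cw) (ltac:(rewrite Ed2; exact: ltD)) (ltac:(by rewrite Ed2 Ea))).
  rewrite maddCA in C2.
  exact: conn_trans C1 (conn_sym C2).
have Hx : \sum_l (e l).1 < x.1.
  rewrite -/S -/D; move: HDB HD1 HS1; rewrite /B; lia.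
have repj j1 c1 : mexp sigma (madd (mvar (ie j1)) c1) = x ->
    exists lam, Rep e lam x /\ 1 <= lam j1.
  move=> H1; have [mu Hmu] := hspan _ (Hin c1).
  exists (fun l => unitv j1 l + mu l); split.
    by have := rep_add (rep_e e j1) Hmu; rewrite (Ec _ _ H1) pt_add_sub.
  have : 0 <= mu j1 by case: Hmu.
  rewrite /unitv eqxx /=; lra.
have [j [c [Hjc Hmc]]] := toB m (erefl x).
have [j' [c' [Hjc' Hmc']]] := toB m' (esym E).
have [lam [Hl Hlj]] := repj _ _ Hjc.
have [lam' [Hl' Hlj']] := repj _ _ Hjc'.
have HR := chain hdelta Hx Rtr HQ Hl Hl' Hlj Hlj'.
exact: conn_trans Hmc (conn_trans (HR.2 _ _ Hjc Hjc') (conn_sym Hmc')).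
Qed.


Unset Implicit Arguments.

Theorem mainTheorem7 (k : fieldType) (n : nat)
    (alpha : 'I_n.+1 -> rat) (a b : 'I_n.+1 -> int)
    (t : nat) (e : 'I_t.+1 -> point n)
    (he : forall j, inSigma alpha a b (e j))
    (hdelta : forall j, 0 < (e j).1)
    (hspan : forall x, inSigma alpha a b x -> inQnnSpan e x)
    (r : nat) (sigma : 'I_r -> point n)
    (hsig_inj : injective sigma)
    (hsig_in : forall i, [/\ inSigma alpha a b (sigma i), sigma i != pt_zero n
                             & (sigma i).1 <= \sum_j (e j).1])
    (hsig_onto : forall x, inSigma alpha a b x -> x != pt_zero n ->
                   x.1 <= \sum_j (e j).1 -> exists i, sigma i = x) :
  let S := \sum_j (e j).1 in
  (* chi is surjective onto k[Sigma] *)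
  (forall f : seq (k * point n)%type,
     (forall u, u \in f -> inSigma alpha a b u.2) ->
     exists p : mpoly k r, forall x, chi sigma p x = scoef f x) /\
  (* ker chi is generated by homogeneous elements of degree <= 2(S-1) *)
  (forall p : mpoly k r, (forall x, chi sigma p x = 0) ->
     exists gs : seq (mpoly k r * mpoly k r),
       (forall qg, qg \in gs ->
          (exists D : int, D <= 2 * (S - 1) /\ homogeneous sigma D qg.2) /\
          (forall x, chi sigma qg.2 x = 0)) /\
       (forall m, pcoef p m = pcoef (flatten [seq pmul qg.1 qg.2 | qg <- gs]) m)).
Proof.
move=> S; split.
  elim=> [|u f IH] Hf.
    by exists [::] => x; rewrite /chi /scoef !big_nil.
  have [p Hp] := IH (fun v Hv => Hf v (ltac:(by rewrite inE Hv orbT))).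
  have [c Hc] := surj he hdelta hspan hsig_onto (Hf u (mem_head _ _)).
  exists ((u.1, c) :: p) => x.
  by rewrite /chi /scoef !big_cons /= Hc -/(chi sigma p x) Hp.
move=> p Hp.
have := kernel_gen (fiber_conn k he hdelta hspan hsig_inj hsig_in hsig_onto) Hp.
by rewrite /InI /goodgen.
Qed.
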